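(* Let $\mathbb{K}$ be a field of characteristic $2$, let $(A,L,\theta_L)$ be a restricted Lie–Rinehart algebra, let $(A,M,\theta_M)$ be a strongly abelian restricted Lie–Rinehart algebra, and let $0\to(A,M,\theta_M)\xrightarrow{\iota}(A,E,\theta_E)\xrightarrow{\pi}(A,L,\theta_L)\to0$ be an abelian extension. Then $(M,\rho)$ is a restricted Lie–Rinehart module over $(A,L,\theta_L)$, where $\rho:L\to\mathrm{End}(M)$ is defined by $\rho(x)(m)=\iota^{-1}([\tilde x,\iota(m)]_E)$ for $x\in L$, $m\in M$, with $\tilde x\in E$ such that $\pi(\tilde x)=x$.
   Context: $\mathbb{K}$ has characteristic $2$. Restricted Lie algebra: Lie algebra with $x\mapsto x^{[2]}$, $(\lambda x)^{[2]}=\lambda^2x^{[2]}$, $\mathrm{ad}_{x^{[2]}}=\mathrm{ad}_x^2$, $(x+y)^{[2]}=x^{[2]}+y^{[2]}+[x,y]$. Restricted Lie–Rinehart algebra $(A,L,\theta)$: $A$ commutative associative, $L$ restricted Lie algebra and $A$-module, $\theta:L\to\mathrm{Der}(A)$ an $A$-linear restricted Lie morphism ($\mathrm{Der}(A)$ with commutator and $D^{[2]}=D^2$) with $[x,ay]=a[x,y]+\theta(x)(a)y$ and $(ax)^{[2]}=a^2x^{[2]}+\theta(ax)(a)x$. Morphisms: $A$-linear restricted Lie morphisms $f$ with $\theta_H\circ f=\theta_L$. Strongly abelian: $[m,n]=0$, $m^{[2]}=0$ for all $m,n$. An abelian extension is a short exact sequence of restricted Lie–Rinehart algebras over the same $A$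 as in the claim. A restricted Lie–Rinehart module over $(A,L,\theta_L)$: an $A$-module $M$ with a restricted Lie morphism $\rho:L\to\mathrm{End}(M)$ (i.e. $\rho([x,y])=[\rho(x),\rho(y)]$, $\rho(x^{[2]})=\rho(x)^2$) such that $\rho(x)(am)=a\rho(x)(m)+\theta_L(x)(a)m$. *)

(* Defs.v *)
From HB Require Import structures.
From mathcomp Require Import all_boot all_order all_algebra.
Set Implicit Arguments. Unset Strict Implicit. Unset Printing Implicit Defensive.
Import GRing.Theory.
Local Open Scope ring_scope.

(* Conventions: K is a field (characteristic 2 is a hypothesis of the theorem),
   A : comAlgType K is a commutative associative K-algebra, and the carrier of a
   Lie–Rinehart algebra is an A-module L : lmodType A; its K-vector space
   structure is the restriction of scalars along c |-> c%:A. *)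

Section RLR.
Variables (K : fieldType) (A : comAlgType K).

Definition is_derivation (D : A -> A) : Prop :=
  (forall a b, D (a + b) = D a + D b) /\
  (forall (c : K) a, D (c *: a) = c *: D a) /\
  (forall a b, D (a * b) = a * D b + D a * b).

Record is_rLR (L : lmodType A) (br : L -> L -> L) (sq : L -> L)
    (th : L -> A -> A) : Prop := {
  br_addl : forall x y z, br (x + y) z = br x z + br y z;
  br_addr : forall x y z, br x (y + z) = br x y + br x z;
  br_scalel : forall (c : K) x y, br (c%:A *: x) y = c%:A *: br x y;
  br_scaler : forall (c : K) x y, br x (c%:A *: y) = c%:A *: br x y;
  br_alt : forall x, br x x = 0;
  br_jacobi : forall x y z, br x (br y z) + br y (br z x) + br z (br x y) = 0;
  sq_scale : forall (c : K) x, sq (c%:A *: x) = (c ^+ 2)%:A *: sq x;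
  sq_ad : forall x y, br (sq x) y = br x (br x y);
  sq_add : forall x y, sq (x + y) = sq x + sq y + br x y;
  th_der : forall x, is_derivation (th x);
  th_add : forall x y a, th (x + y) a = th x a + th y a;
  th_Alin : forall (b : A) x a, th (b *: x) a = b * th x a;
  th_br : forall x y a, th (br x y) a = th x (th y a) - th y (th x a);
  th_sq : forall x a, th (sq x) a = th x (th x a);
  br_leibniz : forall x (a : A) y, br x (a *: y) = a *: br x y + th x a *: y;
  sq_Ascale : forall (a : A) x, sq (a *: x) = (a ^+ 2) *: sq x + th (a *: x) a *: x
}.

Definition is_rLR_morphism (L H : lmodType A)
    (brL : L -> L -> L) (sqL : L -> L) (thL : L -> A -> A)
    (brH : H -> H -> H) (sqH : H -> H) (thH : H -> A -> A) (f : L -> H) : Prop :=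
  (forall x y, f (x + y) = f x + f y) /\
  (forall (a : A) x, f (a *: x) = a *: f x) /\
  (forall x y, f (brL x y) = brH (f x) (f y)) /\
  (forall x, f (sqL x) = sqH (f x)) /\
  (forall x a, thH (f x) a = thL x a).

Definition strongly_abelian (M : lmodType A) (br : M -> M -> M) (sq : M -> M) :=
  (forall m n, br m n = 0) /\ (forall m, sq m = 0).

Definition is_rLR_module (L : lmodType A) (br : L -> L -> L) (sq : L -> L)
    (th : L -> A -> A) (M : lmodType A) (rho : L -> M -> M) : Prop :=
  (forall x m n, rho x (m + n) = rho x m + rho x n) /\
  (forall x (c : K) m, rho x (c%:A *: m) = c%:A *: rho x m) /\
  (forall x y m, rho (x + y) m = rho x m + rho y m) /\
  (forall (c : K) x m, rho (c%:A *: x) m = c%:A *: rho x m) /\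
  (forall x y m, rho (br x y) m = rho x (rho y m) - rho y (rho x m)) /\
  (forall x m, rho (sq x) m = rho x (rho x m)) /\
  (forall x (a : A) m, rho x (a *: m) = a *: rho x m + th x a *: m).

End RLR.

(* Main.v *)
Require Import Defs.
From Stdlib Require Import ClassicalEpsilon.
From HB Require Import structures.
From mathcomp Require Import all_boot all_order all_algebra.
Import GRing.Theory.
Local Open Scope ring_scope.

Lemma add_morph0 (U V : zmodType) (f : U -> V) :
  (forall x y, f (x + y) = f x + f y) -> f 0 = 0.
Proof.
move=> Hf; apply/eqP; rewrite -(addrI (f 0) (_ : f 0 + f 0 = f 0 + 0)) //.
by rewrite -Hf !addr0.
Qed.

Lemma add_morphN (U V : zmodType) (f : U -> V) :
  (forall x y, f (x + y) = f x + f y) -> forall x, f (- x) = - f x.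
Proof.
move=> Hf x; apply/eqP; rewrite -addr_eq0 -Hf addNr.
by rewrite (@add_morph0 _ _ _ Hf).
Qed.

Lemma add_morphB (U V : zmodType) (f : U -> V) :
  (forall x y, f (x + y) = f x + f y) -> forall x y, f (x - y) = f x - f y.
Proof. by move=> Hf x y; rewrite Hf (@add_morphN _ _ _ Hf). Qed.

Theorem mainTheorem8 (K : fieldType) (A : comAlgType K)
  (hK : 2 \in [pchar K])
  (L : lmodType A) (brL : L -> L -> L) (sqL : L -> L) (thL : L -> A -> A)
  (M : lmodType A) (brM : M -> M -> M) (sqM : M -> M) (thM : M -> A -> A)
  (E : lmodType A) (brE : E -> E -> E) (sqE : E -> E) (thE : E -> A -> A)
  (iota : M -> E) (pi : E -> L)
  (HL : is_rLR brL sqL thL) (HM : is_rLR brM sqM thM) (HE : is_rLR brE sqE thE)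
  (HMab : strongly_abelian brM sqM)
  (Hiota : is_rLR_morphism brM sqM thM brE sqE thE iota)
  (Hpi : is_rLR_morphism brE sqE thE brL sqL thL pi)
  (iota_inj : injective iota)
  (pi_surj : forall x : L, exists e : E, pi e = x)
  (exact : forall e : E, pi e = 0 <-> exists m : M, e = iota m) :
  exists rho : L -> M -> M,
    (forall (x : L) (xt : E) (m : M), pi xt = x -> iota (rho x m) = brE xt (iota m)) /\
    is_rLR_module brL sqL thL rho.
Proof.
case: Hiota => [ia [iA [ibr [isq ith]]]].
case: Hpi => [pa [pA [pbr [psq pth]]]].
case: HMab => [Mbr Msq].
have pim : forall m, pi (iota m) = 0 by move=> m; apply/exact; exists m.
have brE0r : forall x, brE x 0 = 0.
  by move=> x; apply: (@add_morph0 _ _ (brE x)); apply: (br_addr HE).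
have brE0l : forall x, brE 0 x = 0.
  by move=> x; apply: (@add_morph0 _ _ (brE^~ x)) => a b; apply: (br_addl HE).
have brENr : forall x y, brE x (- y) = - brE x y.
  by move=> x; apply: (@add_morphN _ _ (brE x)); apply: (br_addr HE).
have brENl : forall x y, brE (- x) y = - brE x y.
  by move=> x y; apply: (@add_morphN _ _ (brE^~ y)) => a b; apply: (br_addl HE).
have anti : forall x y, brE x y = - brE y x.
  move=> x y; apply/eqP; rewrite -addr_eq0.
  have h := br_alt HE (x + y).
  by rewrite (br_addl HE) !(br_addr HE) !(br_alt HE) add0r addr0 in h; rewrite h.
have H : forall x m, exists m', forall xt, pi xt = x -> iota m' = brE xt (iota m).
  move=> x m; case: (pi_surj x) => xt0 Hx0.
  have : pi (brE xt0 (iota m)) = 0.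
    by rewrite pbr pim; apply: (@add_morph0 _ _ (brL _)); apply: (br_addr HL).
  case/exact => m' Hm'; exists m' => xt Hxt.
  have : pi (xt - xt0) = 0 by rewrite (@add_morphB _ _ _ pa) Hxt Hx0 subrr.
  case/exact => n Hn.
  have -> : xt = iota n + xt0 by rewrite -Hn subrK.
  by rewrite (br_addl HE) -ibr Mbr (@add_morph0 _ _ _ ia) add0r.
pose rho x m := proj1_sig (constructive_indefinite_description _ (H x m)).
have key : forall x xt m, pi xt = x -> iota (rho x m) = brE xt (iota m).
  by move=> x xt m; exact: (proj2_sig (constructive_indefinite_description _ (H x m)) xt).
exists rho; split => //.
split; [|split; [|split; [|split; [|split; [|split]]]]].
- move=> x m n; case: (pi_surj x) => xt Hx; apply: iota_inj.
  by rewrite ia !(key x xt) // ia (br_addr HE).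
- move=> x c m; case: (pi_surj x) => xt Hx; apply: iota_inj.
  by rewrite iA !(key x xt) // iA (br_scaler HE).
- move=> x y m; case: (pi_surj x) => xt Hx; case: (pi_surj y) => yt Hy.
  apply: iota_inj; rewrite ia (key _ (xt + yt)); last by rewrite pa Hx Hy.
  by rewrite (key x xt) // (key y yt) // (br_addl HE).
- move=> c x m; case: (pi_surj x) => xt Hx; apply: iota_inj.
  rewrite (key _ (c%:A *: xt)); last by rewrite pA Hx.
  by rewrite iA (key x xt) // (br_scalel HE).
- move=> x y m; case: (pi_surj x) => xt Hx; case: (pi_surj y) => yt Hy.
  apply: iota_inj; rewrite (key _ (brE xt yt)); last by rewrite pbr Hx Hy.
  rewrite (@add_morphB _ _ _ ia) (key x xt) // (key y yt) // (key y yt) // (key x xt) //.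
  have J := br_jacobi HE xt yt (iota m).
  rewrite (anti (iota m) xt) brENr (anti (iota m) (brE xt yt)) in J.
  by move/eqP: J; rewrite subr_eq0 => /eqP ->.
- move=> x m; case: (pi_surj x) => xt Hx; apply: iota_inj.
  rewrite (key _ (sqE xt)); last by rewrite psq Hx.
  by rewrite (key x xt) // (key x xt) // (sq_ad HE).
- move=> x a m; case: (pi_surj x) => xt Hx; apply: iota_inj.
  rewrite ia !iA !(key x xt) // iA (br_leibniz HE).
  by rewrite -pth Hx.
Qed.
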